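(* Let $G$ be a finitely generated group containing a finite index characteristic subgroup $H$, and let $\{s_i\}_{i=1}^{[G:H]}$ be representatives of the right cosets of $H$ (so $G=\bigcup_iHs_i$). Fix $\varphi\in\mathrm{Aut}(G)$ and $x\in G$, let $\bar\varphi$ be the automorphism of $H$ induced by $\varphi$, and let $f_{x,i}\in\mathrm{Aut}(H)$ be conjugation by $x_i=s_i\,x\,\varphi(s_i)^{-1}$. Then $$[x]_\varphi=\bigcup_{i=1}^{[G:H]}[1_H]_{f_{x,i}\circ\bar\varphi}\cdot x_i,$$ where $[1_H]_{f_{x,i}\circ\bar\varphi}=\{z\,(f_{x,i}(\bar\varphi(z)))^{-1}:z\in H\}$.
   Context: For $\psi\in\mathrm{Aut}(G)$, the $\psi$-twisted conjugacy class of $x$ is $[x]_\psi=\{z\,x\,\psi(z)^{-1}:z\in G\}$. *)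

(* Defs.v *)
From Stdlib Require Import List.

Record Group := {
  carrier :> Type;
  gmul : carrier -> carrier -> carrier;
  gone : carrier;
  ginv : carrier -> carrier;
  gmulA : forall a b c, gmul a (gmul b c) = gmul (gmul a b) c;
  gmul1l : forall a, gmul gone a = a;
  gmul1r : forall a, gmul a gone = a;
  gmulVl : forall a, gmul (ginv a) a = gone;
  gmulVr : forall a, gmul a (ginv a) = gone
}.

Arguments gmul {g} _ _.
Arguments gone {g}.
Arguments ginv {g} _.

Declare Scope grp_scope.
Delimit Scope grp_scope with grp.
Notation "a * b" := (gmul a b) : grp_scope.
Notation "a ^-1" := (ginv a) (at level 3, format "a ^-1") : grp_scope.
Notation "1" := gone : grp_scope.
Local Open Scope grp_scope.

Definition is_subgroup {G : Group} (H : G -> Prop) : Prop :=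
  H 1 /\ (forall a b, H a -> H b -> H (a * b)) /\ (forall a, H a -> H (a^-1)).

Definition generated {G : Group} (S : G -> Prop) (g : G) : Prop :=
  forall K : G -> Prop, is_subgroup K -> (forall s, S s -> K s) -> K g.

Definition finitely_generated (G : Group) : Prop :=
  exists l : list G, forall g : G, generated (fun s => In s l) g.

Definition is_aut {G : Group} (phi : G -> G) : Prop :=
  (forall a b, phi (a * b) = phi a * phi b) /\
  exists psi : G -> G, (forall a, psi (phi a) = a) /\ (forall a, phi (psi a) = a).

Definition characteristic {G : Group} (H : G -> Prop) : Prop :=
  is_subgroup H /\ forall psi : G -> G, is_aut psi -> forall h, H h -> H (psi h).

Definition in_rcoset {G : Group} (H : G -> Prop) (s g : G) : Prop :=
  exists h, H h /\ g = h * s.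

(* s 0, ..., s (n-1) is a complete irredundant system of representatives of the
   right cosets of H in G; in particular n = [G : H] (finite index). *)
Definition rcoset_reps {G : Group} (H : G -> Prop) (n : nat) (s : nat -> G) : Prop :=
  (forall g : G, exists i, i < n /\ in_rcoset H (s i) g) /\
  (forall i j, i < n -> j < n -> (forall g, in_rcoset H (s i) g <-> in_rcoset H (s j) g) -> i = j).

Definition twisted_class {G : Group} (psi : G -> G) (x : G) (g : G) : Prop :=
  exists z : G, g = z * x * (psi z)^-1.

Definition twisted_class_in {G : Group} (H : G -> Prop) (psi : G -> G) (y : G) (g : G) : Prop :=
  exists z : G, H z /\ g = z * y * (psi z)^-1.

Definition conj_by {G : Group} (a : G) (y : G) : G := a * y * a^-1.

(* Main.v *)
Require Import Defs.
Local Open Scope grp_scope.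

Section L.
Variable G : Group.
Lemma inv_uniq (a b : G) : a * b = 1 -> b = a^-1.
Proof. intros E. rewrite <- (gmul1l G b), <- (gmulVl G a), <- gmulA, E, gmul1r. reflexivity. Qed.
Lemma inv_mul (a b : G) : (a * b)^-1 = b^-1 * a^-1.
Proof. symmetry. apply inv_uniq. rewrite <- gmulA, (gmulA _ b), gmulVr, gmul1l, gmulVr. reflexivity. Qed.
Lemma inv_inv (a : G) : (a^-1)^-1 = a.
Proof. symmetry. apply inv_uniq. apply gmulVl. Qed.
Lemma inv1 : (1 : G)^-1 = 1.
Proof. symmetry. apply inv_uniq. apply gmul1l. Qed.
Lemma mulKV (a b : G) : a * (a^-1 * b) = b.
Proof. rewrite gmulA, gmulVr, gmul1l. reflexivity. Qed.
Lemma mulVK (a b : G) : a^-1 * (a * b) = b.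
Proof. rewrite gmulA, gmulVl, gmul1l. reflexivity. Qed.
Lemma hom_inv (phi : G -> G) : (forall a b, phi (a * b) = phi a * phi b) ->
  forall a, phi (a^-1) = (phi a)^-1.
Proof. intros M a. apply inv_uniq. rewrite <- M, gmulVr.
  assert (E : phi 1 = 1).
  { assert (K : phi 1 * phi 1 = phi 1 * 1) by (rewrite <- M, gmul1l, gmul1r; reflexivity).
    rewrite <- (mulVK (phi 1) (phi 1)), K, mulVK. reflexivity. }
  exact E. Qed.
End L.

Ltac gsimp := repeat (rewrite <- ?gmulA; rewrite ?inv_mul, ?inv_inv, ?inv1, ?gmul1l, ?gmul1r,
   ?mulKV, ?mulVK, ?gmulVr, ?gmulVl).

Theorem mainTheorem17 (G : Group) (H : G -> Prop) (n : nat) (s : nat -> G)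
  (phi : G -> G) (x : G) :
  finitely_generated G ->
  characteristic H ->
  rcoset_reps H n s ->
  is_aut phi ->
  let xi := fun i => s i * x * (phi (s i))^-1 in
  forall g : G,
    twisted_class phi x g <->
    exists i, i < n /\
      exists c, twisted_class_in H (fun z => conj_by (xi i) (phi z)) 1 c /\ g = c * xi i.
Proof.
  intros _ _ [Hcov _] [M _] xi g. unfold xi, twisted_class, twisted_class_in, conj_by.
  split.
  - intros [z ->]. destruct (Hcov z) as [i [Hi [h [Hh ->]]]].
    exists i. split; [exact Hi|]. exists (h * 1 * (s i * x * (phi (s i))^-1 * phi h *
       (s i * x * (phi (s i))^-1)^-1)^-1).
    split. { exists h. split; [exact Hh| reflexivity]. }
    rewrite M. gsimp. reflexivity.
  - intros [i [_ [c [[h [Hh ->]] ->]]]]. exists (h * s i).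
    rewrite M. gsimp. reflexivity.
Qed.
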